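(* Let $R$ be a generalized p.q.-Baer $*$-ring. Then for every $x\in R$ there exists $n\in\mathbb N$ such that $r_R((xR)^n)\cap (x^* )^nR=\{0\}$.
   Context: A $*$-ring is a ring with an involution; a projection is $e$ with $e=e^*=e^2$. $r_R(S)=\{a\in R: sa=0\ \forall s\in S\}$. A $*$-ring $R$ is a generalized p.q.-Baer $*$-ring if for every principal ideal $I$ of $R$ there exist a positive integer $n$ and a projection $e\in R$ with $r_R(I^n)=eR$; in the paper this is used in the form: for every $x\in R$ there are $n\in\mathbb N$ and a projection $e$ with $r_R((xR)^n)=eR$. Such a ring has a unity. *)

(* Defs.v *)
From HB Require Import structures.
From mathcomp Require Import all_boot all_algebra.
Set Implicit Arguments. Unset Strict Implicit. Unset Printing Implicit Defensive.
Import GRing.Theory.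
Local Open Scope ring_scope.

(* Subsets of a ring are predicates R -> Prop. Rings are pzRingType (unital,
   possibly the zero ring). *)

Definition is_involution (R : pzRingType) (star : R -> R) : Prop :=
  (forall x y, star (x + y) = star x + star y) /\
  (forall x y, star (x * y) = star y * star x) /\
  (forall x, star (star x) = x).

Definition is_projection (R : pzRingType) (star : R -> R) (e : R) : Prop :=
  e = star e /\ e = e * e.

Definition rann (R : pzRingType) (S : R -> Prop) : R -> Prop :=
  fun a => forall s, S s -> s * a = 0.

Definition rprin (R : pzRingType) (a : R) : R -> Prop :=
  fun z => exists r, z = a * r.

Inductive addspan (R : pzRingType) (S : R -> Prop) : R -> Prop :=
| addspan0 : addspan S 0
| addspan_gen s : S s -> addspan S s
| addspanD a b : addspan S a -> addspan S b -> addspan S (a + b)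
| addspanN a : addspan S a -> addspan S (- a).

Definition setmul (R : pzRingType) (I J : R -> Prop) : R -> Prop :=
  addspan (fun z => exists i j, I i /\ J j /\ z = i * j).

(* I^n, n >= 1 (I^1 = I, I^(m+1) = I^m I); I^0 := R by convention (unused) *)
Fixpoint setpow (R : pzRingType) (I : R -> Prop) (n : nat) : R -> Prop :=
  match n with
  | 0 => fun _ => True
  | m.+1 => match m with 0 => I | _ => setmul (setpow I m) I end
  end.

Definition gen_pq_Baer (R : pzRingType) (star : R -> R) : Prop :=
  forall x : R, exists n : nat, exists e : R,
    (0 < n)%N /\ is_projection star e /\
    (forall a, rann (setpow (rprin x) n) a <-> rprin e a).

(* Main.v *)
Require Import Defs.
From mathcomp Require Import all_boot all_algebra.
Local Open Scope ring_scope.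
Import GRing.Theory.

Lemma pow_in_setpow (R : pzRingType) (x : R) n :
  (0 < n)%N -> setpow (rprin x) n (x ^+ n).
Proof.
case: n => // n _; elim: n => [|m IH].
  by exists 1; rewrite expr1 mulr1.
rewrite exprSr /=.
apply: addspan_gen; exists (x ^+ m.+1), x; split; first exact: IH.
by split; [exists 1; rewrite mulr1|].
Qed.

Lemma star_pow (R : pzRingType) (star : R -> R) (x : R) n :
  is_involution star -> star (x ^+ n) = star x ^+ n.
Proof.
move=> [hD [hM hK]].
have s1 : star 1 = 1.
  have := hM 1 (star 1); rewrite mul1r hK mul1r => h; by rewrite -h.
elim: n => [|n IH]; first by rewrite !expr0.
by rewrite exprSr hM IH exprS.
Qed.

Theorem mainTheorem3 (R : pzRingType) (star : R -> R) :
  is_involution star -> gen_pq_Baer star ->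
  forall x : R, exists n : nat, (0 < n)%N /\
    (forall a : R, rann (setpow (rprin x) n) a ->
                   rprin (star x ^+ n) a -> a = 0).
Proof.
move=> inv hB x; have [n [e [n0 [[ee ee2] he]]]] := hB x.
exists n; split => // a ha [r ar].
have [hD [hM hK]] := inv.
have s0 : star 0 = 0.
  have := hD 0 0; rewrite addr0 => h.
  by apply: (addrI (star 0)); rewrite addr0 -h.
have xe : x ^+ n * e = 0.
  have : rprin e e by exists e.
  by move/he => /(_ _ (@pow_in_setpow _ x n n0)).
have ex : e * star x ^+ n = 0.
  by rewrite -star_pow // {1}ee -hM xe s0.
have /he [s hs] := ha.
have -> : a = e * (star x ^+ n * r).
  by rewrite -ar hs mulrA -ee2.
by rewrite mulrA ex mul0r.
Qed.
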